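(* For a reaction network $(X,\mathscr{R})$, the binary relation $\rightleftharpoons$ on $X$ is an equivalence relation.
   Context: A reaction network (RN) $(X,\mathscr{R})$ consists of a finite non-empty set $X$ of species and a finite non-empty set $\mathscr{R}$ of reactions. Each reaction $r$ is given by stoichiometric coefficients $s^-_{xr},s^+_{xr}\in\mathbb{N}_0$. The stoichiometric matrix $S\in\mathbb{Z}^{X\times\mathscr{R}}$ has entries $S_{xr}=s^+_{xr}-s^-_{xr}$. The paper assumes throughout that RNs are closed: every reaction $r$ has $x,y$ with $S_{xr}<0<S_{yr}$. Distinct $x,y\in X$ are obligatory isomers if there is $v\in\mathbb{Z}^{\mathscr{R}}$ with: - $-[Sv]_x=[Sv]_y=k$ for some positive integer $k$; - $[Sv]_z=0$ for all $z\in X\setminus\{x,y\}$. Write $x\rightleftharpoons y$ if $x=y$ or $x$ and $y$ are obligatory isomers. *)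

(* Defs.v *)
From HB Require Import structures.
From mathcomp Require Import all_boot all_order all_algebra.
Set Implicit Arguments. Unset Strict Implicit. Unset Printing Implicit Defensive.
Import Order.TTheory GRing.Theory Num.Theory.
Local Open Scope ring_scope.

(* A reaction network: finite species type X, finite reaction type Rx,
   stoichiometric coefficients s^-_{xr} (sminus) and s^+_{xr} (splus). *)

Definition stoich (X Rx : finType) (sminus splus : X -> Rx -> nat)
  (x : X) (r : Rx) : int := (splus x r)%:Z - (sminus x r)%:Z.

Definition Sv (X Rx : finType) (sminus splus : X -> Rx -> nat)
  (v : Rx -> int) (x : X) : int :=
  \sum_(r : Rx) stoich sminus splus x r * v r.

Definition closed_RN (X Rx : finType) (sminus splus : X -> Rx -> nat) : Prop :=
  forall r : Rx, exists x y : X,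
    stoich sminus splus x r < 0 /\ 0 < stoich sminus splus y r.

Definition obligatory_isomers (X Rx : finType) (sminus splus : X -> Rx -> nat)
  (x y : X) : Prop :=
  x <> y /\
  exists v : Rx -> int, exists k : nat, (0 < k)%N /\
    - Sv sminus splus v x = k%:Z /\ Sv sminus splus v y = k%:Z /\
    (forall z : X, z <> x -> z <> y -> Sv sminus splus v z = 0).

Definition isomer_rel (X Rx : finType) (sminus splus : X -> Rx -> nat)
  (x y : X) : Prop :=
  x = y \/ obligatory_isomers sminus splus x y.

(* Main.v *)
Require Import Defs.
From mathcomp Require Import all_boot all_order all_algebra.
From mathcomp Require Import ring.
Import GRing.Theory Num.Theory.
Local Open Scope ring_scope.

Lemma Sv_lin (X Rx : finType) (sminus splus : X -> Rx -> nat) (a b : int)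
  (v w : Rx -> int) (x : X) :
  Sv sminus splus (fun r => a * v r + b * w r) x =
  a * Sv sminus splus v x + b * Sv sminus splus w x.
Proof.
rewrite /Sv !mulr_sumr -big_split /=; apply: eq_bigr => r _; ring.
Qed.

Theorem proposition9 (X Rx : finType) (sminus splus : X -> Rx -> nat)
  (hX : (0 < #|X|)%N) (hR : (0 < #|Rx|)%N)
  (hclosed : closed_RN sminus splus) :
  (forall x : X, isomer_rel sminus splus x x) /\
  (forall x y : X, isomer_rel sminus splus x y -> isomer_rel sminus splus y x) /\
  (forall x y z : X, isomer_rel sminus splus x y -> isomer_rel sminus splus y z ->
     isomer_rel sminus splus x z).
Proof.
split; first by move=> x; left.
split.
  move=> x y [->|[nxy [v [k [k0 [hx [hy ho]]]]]]]; first by left.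
  right; split; first by move=> e; apply: nxy.
  exists (fun r => (-1) * v r + 0 * v r), k; split => //.
  rewrite !Sv_lin; split; first by rewrite hy; ring.
  split; first by rewrite -hx; ring.
  by move=> z h1 h2; rewrite Sv_lin ho //; ring.
move=> x y z [->|hxy] //.
case=> [<-|hyz]; first by right.
case: (eqVneq x z) => [->|nxz]; first by left.
right; split; first by apply/eqP.
case: hxy => nxy [v [k [k0 [hx [hy ho]]]]].
case: hyz => nyz [w [m [m0 [hx' [hy' ho']]]]].
exists (fun r => m%:Z * v r + k%:Z * w r), (k * m)%N.
split; first by rewrite muln_gt0 k0 m0.
rewrite !Sv_lin.
have zx : z <> x by move=> e; rewrite e eqxx in nxz.
have xz : x <> z by move=> e; rewrite e eqxx in nxz.
have nyx : y <> x by move=> e; apply: nxy.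
have nzy : z <> y by move=> e; apply: nyz.
rewrite (ho' x nxy xz) (ho z zx nzy).
have hx2 : Sv sminus splus v x = - k%:Z by rewrite -hx opprK.
have hy2 : Sv sminus splus w y = - m%:Z by rewrite -hx' opprK.
rewrite hx2 hy'; split; first by rewrite PoszM; ring.
split; first by rewrite PoszM; ring.
move=> t tx tz; rewrite Sv_lin.
case: (eqVneq t y) => [->|ty]; first by rewrite hy hy2; ring.
by rewrite ho // ?ho' //; [ring | apply/eqP | apply/eqP].
Qed.
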